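(* In the setting described in the context, for every $n\ge1$, every $k\ge0$ and every $x\in\mathbb{R}$, \[ \int_{\mathbb{R}}K_n(x,y)\,y^k\,K_n(y,x)\,d\mu(y)=\sum_{\ell=0}^{n-1}\sum_{\ell'=0}^{n-1}q_\ell(x)\,[J^k]_{\ell,\ell'}\,p_{\ell'}(x), \] i.e. the left-hand side equals $\langle\Pi_n\vec q(x),J^k\Pi_n\vec p(x)\rangle_{\ell^2}$, where $\vec p(x)=(p_0(x),p_1(x),\dots)^t$, $\vec q(x)=(q_0(x),q_1(x),\dots)^t$ and $\Pi_n$ replaces all coordinates with index $\ge n$ by $0$.
   Context: Let $r\ge1$ and let $\mu_1,\dots,\mu_r$ be positive Borel measures on $\mathbb{R}$ with all moments finite, forming a perfect system: for every $\vec n\in\mathbb{N}_0^r$ there is a monic polynomial $P_{\vec n}$ of degree $|\vec n|=n_1+\dots+n_r$ with $\int x^kP_{\vec n}\,d\mu_j=0$ for $0\le k\le n_j-1$, $1\le j\le r$. Type I polynomials $A_{\vec n}=(A_{\vec n,1},\dots,A_{\vec n,r})$: $\deg A_{\vec n,j}\le n_j-1$, $\sum_j\int x^kA_{\vec n,j}\,d\mu_j=0$ for $0\le k\le|\vec n|-2$, and $=1$ for $k=|\vec n|-1$. Let $\mu$ be a positive measure with $\mu_j\ll\mu$, $w_j=d\mu_j/d\mu$, $Q_{\vec n}=\sum_jA_{\vec n,j}w_j$. Fix a path $(\vec n_\ell)_{\ell\ge0}$ with $|\vec n_\ell|=\ell$, $\vec n_{\ell+1}=\vec n_\ell+\vec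 e_{i_\ell}$ ($\vec e_j$ the $j$-th unit vector), and set $p_\ell=P_{\vec n_\ell}$, $q_\ell=Q_{\vec n_{\ell+1}}$, so that $\int p_\ell q_{\ell'}\,d\mu=\delta_{\ell,\ell'}$. The Christoffel--Darboux kernel is $K_n(x,y)=\sum_{j=0}^{n-1}p_j(x)q_j(y)$. The matrix $J=[J_{\ell,k}]_{\ell,k\ge0}$ is defined by $xp_\ell=\sum_{k=0}^{\ell+1}J_{\ell,k}p_k$, $J_{\ell,k}=0$ for $k>\ell+1$ (lower Hessenberg, so its powers are well defined). *)

(* Defs.v *)
From HB Require Import structures.
From mathcomp Require Import all_boot all_order all_algebra.
From mathcomp Require Import all_classical all_reals all_analysis.
Set Implicit Arguments. Unset Strict Implicit. Unset Printing Implicit Defensive.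
Import Order.TTheory GRing.Theory Num.Theory.
Local Open Scope ring_scope.

Definition mnorm (r : nat) (nv : 'I_r -> nat) : nat := (\sum_(j < r) nv j)%N.

(* The multi-index n_l along the path determined by the directions
   i_0, i_1, ... : n_0 = 0 and n_(l+1) = n_l + e_(i_l). *)
Definition path_idx (r : nat) (i : nat -> 'I_r) (l : nat) : 'I_r -> nat :=
  fun j => (\sum_(m < l) (i m == j))%N.

Definition pseq (R : ringType) (r : nat) (P : ('I_r -> nat) -> {poly R})
  (i : nat -> 'I_r) (l : nat) : {poly R} := P (path_idx i l).

Definition qseq (R : ringType) (r : nat) (A : ('I_r -> nat) -> 'I_r -> {poly R})
  (w : 'I_r -> R -> R) (i : nat -> 'I_r) (l : nat) (y : R) : R :=
  \sum_(j < r) (A (path_idx i l.+1) j).[y] * w j y.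

Definition CDkernel (R : comRingType) (r : nat) (P : ('I_r -> nat) -> {poly R})
  (A : ('I_r -> nat) -> 'I_r -> {poly R}) (w : 'I_r -> R -> R)
  (i : nat -> 'I_r) (n : nat) (x y : R) : R :=
  \sum_(j < n) (pseq P i j).[x] * qseq A w i j y.

(* Powers of a lower Hessenberg infinite matrix J (J l m = 0 for m > l+1):
   [J^0]_{l,l'} = delta, [J^(k+1)]_{l,l'} = sum_{m <= l+1} J_{l,m} [J^k]_{m,l'}
   (the sum is exactly the full matrix product since J is lower Hessenberg). *)
Fixpoint hesspow (R : ringType) (J : nat -> nat -> R) (k l l' : nat) : R :=
  match k with
  | 0 => ((l == l')%:R)
  | k.+1 => \sum_(m < l.+2) J l m * hesspow J k m l'
  end.

(* Main.v *)
From HB Require Import structures.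
From mathcomp Require Import all_boot all_order all_algebra.
From mathcomp Require Import all_classical all_reals all_analysis.
From mathcomp Require Import zify ring measurable_realfun.
Require Import Defs.
Set Implicit Arguments. Unset Strict Implicit. Unset Printing Implicit Defensive.
Import Order.TTheory GRing.Theory Num.Theory.
Local Open Scope ring_scope.

Import numFieldNormedType.Exports.
Local Open Scope classical_set_scope.
Section density.
Context (R : realType).
Variables (mu nu : {measure set R -> \bar R}) (w : R -> R).
Hypothesis mw : measurable_fun setT w.
Hypothesis nuw : forall E : set R, measurable E ->
  (nu E = \int[mu]_(y in E) (w y)%:E)%E.

Let F := [set y | w y < 0].
Let mF : measurable F.
Proof.
have := measurable_fun_ltr mw (measurable_cst (0:R)) measurableT (Y := [set true]) I.
by rewrite setTI /F /preimage /=; congr measurable; apply/funext=> y; apply/propext; split=> [->|/=->].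
Qed.

Lemma wneg_null : mu F = 0%E.
Proof.
pose g y := (- w y)%:E.
have h1 : (\int[mu]_(y in F) (w y)%:E = - \int[mu]_(y in F) g y)%E.
  rewrite -integral_ge0N; last by move=> y Fy; rewrite /g lee_fin oppr_ge0 ltW.
  by apply: eq_integral => y _; rewrite /g EFinN oppeK.
have h2 : (\int[mu]_(y in F) g y = 0)%E.
  apply/eqP; rewrite eq_le integral_ge0 ?andbT; last by move=> y Fy; rewrite /g lee_fin oppr_ge0 ltW.
  by rewrite -oppe_ge0 -h1 -nuw.
have mg : measurable_fun F g by apply/measurable_EFinP/measurableT_comp => //; exact/measurable_funTS.
have : (\int[mu]_(y in F) `|g y| = 0)%E.
  by rewrite -h2; apply: eq_integral => y /set_mem Fy; rewrite gee0_abs // /g lee_fin oppr_ge0 ltW.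
case/(ae_eq_integral_abs mu mF mg) => N [mN N0 sN].
apply/eqP; rewrite -measure_le0 -N0 le_measure ?inE //.
move=> y Fy; apply: sN => /= /(_ Fy) /eqP; rewrite /g eqe oppr_eq0.
by apply/negP; rewrite lt_eqF.
Qed.

Let wp y := Num.max (w y) 0.
Let wp_ge0 y : (0 <= (wp y)%:E)%E.
Proof. by rewrite lee_fin le_max lexx orbT. Qed.
Let mwp : measurable_fun setT wp.
Proof. by apply: measurable_maxr => //; exact: measurable_cst. Qed.

Lemma nuwp E : measurable E -> (nu E = \int[mu]_(y in E) (wp y)%:E)%E.
Proof.
move=> mE; rewrite nuw //; apply: ae_eq_integral => //.
- by apply/measurable_EFinP; exact/measurable_funTS.
- by apply/measurable_EFinP; exact/measurable_funTS.
exists F; split => //; first exact: wneg_null.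
move=> y /= /not_implyP [_ ]; rewrite /F /wp /=; apply: contra_notP => /negP.
by rewrite -leNgt => h; rewrite max_l.
Qed.

Import HBNNSimple.

Lemma density_ge0 (f : R -> \bar R) E : (forall x, (0 <= f x)%E) ->
    measurable E -> measurable_fun E f ->
  (\int[mu]_(x in E) (f x * (wp x)%:E) = \int[nu]_(x in E) f x)%E.
Proof.
move=> f0 mE mf; set g := fun x => (wp x)%:E.
have mg : measurable_fun setT g by exact/measurable_EFinP.
pose h := nnsfun_approx mE mf.
have -> : (\int[nu]_(x in E) f x =
    lim (\int[nu]_(x in E) (EFin \o h n) x @[n --> \oo]))%E.
  have fE x : E x -> f x = lim ((EFin \o h n) x @[n --> \oo]).
    by move=> Ex; apply/esym/cvg_lim => //; exact: cvg_nnsfun_approx.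
  under eq_integral => x /[!inE] /fE -> //.
  apply: monotone_convergence => //.
  - move=> n; apply/measurable_EFinP.
    by apply: (measurable_funS measurableT) => //; exact/measurable_funP.
  - by move=> n x Ex //=; rewrite lee_fin.
  - by move=> x Ex a b ab; rewrite lee_fin; exact/lefP/nd_nnsfun_approx.
have -> : (\int[mu]_(x in E) (f x * g x) =
    lim (\int[mu]_(x in E) ((EFin \o h n) \* g) x @[n --> \oo]))%E.
  have fg x : E x -> (f x * g x = lim (((EFin \o h n) \* g) x @[n --> \oo]))%E.
    by move=> Ex; apply/esym/cvg_lim => //; apply: cvgeZr;
      [by []|exact: cvg_nnsfun_approx].
  under eq_integral => x /[!inE] /fg -> //.
  apply: monotone_convergence => [//| | |].
  - move=> n; apply/emeasurable_funM; apply/measurable_funTS.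
      exact/measurable_EFinP.
    exact: mg.
  - by move=> n x Ex /=; rewrite mule_ge0 ?lee_fin //; apply: wp_ge0.
  - move=> x Ex a b ab/=; rewrite lee_wpmul2r //; last (rewrite lee_fin; exact/lefP/nd_nnsfun_approx); exact: wp_ge0.
suff suf n : (\int[mu]_(x in E) ((EFin \o h n) x * g x) =
    \int[nu]_(x in E) (EFin \o h n) x)%E.
  suff -> : (fun n => \int[mu]_(x in E) ((EFin \o h n) x * g x))%E =
    (fun n => \int[nu]_(x in E) (EFin \o h n) x)%E by [].
  by apply/funext => n; exact: suf.
transitivity (\int[nu]_(x in E)
   (\sum_(y \in range (h n)) (y * \1_(h n @^-1` [set y]) x)%:E))%E; last first.
  by apply: eq_integral => t tE; rewrite /= fimfunE -fsumEFin.
have indich m r : measurable_fun E (fun x => (r * \1_(h m @^-1` [set r]) x)%:E).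
  by apply: (measurable_comp measurableT) => //; exact: measurable_funM.
rewrite ge0_integral_fsum//; last by move=> m y Ey; exact: nnfun_muleindic_ge0.
transitivity (\int[mu]_(x in E) (\sum_(y \in range (h n))
    (y * \1_(h n @^-1` [set y]) x)%:E * g x))%E.
  under [RHS]eq_integral => x xE.
    rewrite -ge0_mule_fsuml => [|y]; last exact: nnfun_muleindic_ge0.
    rewrite fsumEFin // -(fimfunE _ x); over.
  by [].
rewrite ge0_integral_fsum//; last 2 first.
  - move=> y; apply: emeasurable_funM => //; apply: measurable_funTS.
    exact: mg.
  - by move=> m y Ey; rewrite mule_ge0 //; [exact: nnfun_muleindic_ge0|exact: wp_ge0].
apply: eq_fsbigr => r rhn.
under [RHS]eq_integral do rewrite EFinM.
rewrite integralZl_indic_nnsfun => //.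
under eq_integral do rewrite EFinM -muleA.
rewrite ge0_integralZl//.
- under eq_integral do rewrite muleC.
  rewrite (eq_integral (g \_ (h n @^-1` [set r]))); last first.
    by move=> x xE; rewrite epatch_indic.
  by rewrite -integral_mkcondr -nuwp// integral_indic// setIC.
- apply: emeasurable_funM; first exact/measurable_EFinP.
  exact: measurable_funTS mg.
- by move=> t Et; rewrite mule_ge0 ?lee_fin //; exact: wp_ge0.
- by move: rhn; rewrite inE => -[t _ <-]; rewrite lee_fin.
Qed.

Let wwp_ae (f : R -> R) :
  ae_eq mu setT (fun y => (f y * w y)%:E) (fun y => (f y * wp y)%:E).
Proof.
exists F; split => //; first exact: wneg_null.
move=> y /= /not_implyP [_ ]; rewrite /F /wp /=; apply: contra_notP => /negP.
by rewrite -leNgt => h; rewrite max_l.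
Qed.

Lemma density_int (f : R -> R) : measurable_fun setT f ->
  nu.-integrable setT (fun y => (f y)%:E) ->
  mu.-integrable setT (fun y => (f y * w y)%:E) /\
  (\int[mu]_y (f y * w y)%:E = \int[nu]_y (f y)%:E)%E.
Proof.
move=> mf /integrableP [_ fi].
have mfw : measurable_fun setT (fun y => (f y * w y)%:E).
  by apply/measurable_EFinP; exact: measurable_funM.
have mfwp : measurable_fun setT (fun y => (f y * wp y)%:E).
  by apply/measurable_EFinP; exact: measurable_funM.
have wp0 y : 0 <= wp y by rewrite le_max lexx orbT.
have e1 : (\int[mu]_y (f y * w y)%:E = \int[mu]_y (f y * wp y)%:E)%E.
  by apply: ae_eq_integral => //; exact: wwp_ae.
have e2 : (\int[mu]_y `|(f y * w y)%:E| = \int[mu]_y `|(f y * wp y)%:E|)%E.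
  apply: ae_eq_integral => //; try exact: measurableT_comp.
  exact: (ae_eq_abse (wwp_ae f)).
have e3 : (\int[mu]_y `|(f y * wp y)%:E| = \int[nu]_y `|(f y)%:E|)%E.
  rewrite -density_ge0 //; last by apply: measurableT_comp => //; exact/measurable_EFinP.
  by apply: eq_integral => y _; rewrite EFinM abseM (gee0_abs (wp_ge0 y)).
split.
  by apply/integrableP; split => //; rewrite e2 e3.
rewrite e1 integralE [in RHS]integralE; congr (_ - _)%E.
- rewrite -density_ge0 //; last by apply: measurable_funepos; exact/measurable_EFinP.
  apply: eq_integral => y _; rewrite !funeposE.
  have [f0|f0] := leP 0 (f y).
    by rewrite !max_l ?lee_fin ?mulr_ge0 // EFinM.
  have h1 : ((f y * wp y)%:E <= 0)%E by rewrite lee_fin mulr_le0_ge0 // ltW.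
  have h2 : ((f y)%:E <= 0)%E by rewrite lee_fin ltW.
  by rewrite (max_r h1) (max_r h2) mul0e.
- rewrite -density_ge0 //; last by apply: measurable_funeneg; exact/measurable_EFinP.
  apply: eq_integral => y _; rewrite !funenegE.
  have [f0|f0] := leP 0 (f y).
    have h1 : (- (f y * wp y)%:E <= 0)%E by rewrite lee_fin oppr_le0 mulr_ge0.
    have h2 : (- (f y)%:E <= 0)%E by rewrite lee_fin oppr_le0.
    by rewrite (max_r h1) (max_r h2) mul0e.
  have h1 : (0 <= - (f y * wp y)%:E)%E by rewrite lee_fin oppr_ge0 mulr_le0_ge0 // ltW.
  have h2 : (0 <= - (f y)%:E)%E by rewrite lee_fin oppr_ge0 ltW.
  by rewrite (max_l h1) (max_l h2) -EFinN -EFinM mulNr.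
Qed.
End density.

Section polyint.
Context (R : realType).
Variables (nu : {measure set R -> \bar R}).
Hypothesis hmom : forall m : nat, (\int[nu]_y (`|y| ^+ m)%:E < +oo)%E.

Lemma int_mono m : nu.-integrable setT (fun y => (y ^+ m)%:E).
Proof.
apply/integrableP; split; first by apply/measurable_EFinP; exact: exprn_measurable.
by under eq_integral do rewrite abse_EFin normrX; exact: hmom.
Qed.

Lemma int_poly (h : {poly R}) : nu.-integrable setT (fun y => (h.[y])%:E).
Proof.
have : nu.-integrable setT (fun y => \sum_(t < size h) (h`_t)%:E * (y ^+ t)%:E)%E; last first.
  apply: (eq_integrable measurableT) => y _. rewrite horner_coef -sumEFin; apply: eq_bigr => t _; rewrite EFinM.
  by [].
by apply: (integrable_sum measurableT) => t _; apply: (integrableZl measurableT); exact: int_mono.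
Qed.

Definition Lnu (h : {poly R}) : R := fine (\int[nu]_y (h.[y])%:E).

Lemma LnuE h : (\int[nu]_y (h.[y])%:E = (Lnu h)%:E)%E.
Proof. by rewrite /Lnu fineK //; apply: (integrable_fin_num measurableT); exact: int_poly. Qed.

Lemma Lnu_add h1 h2 : Lnu (h1 + h2) = Lnu h1 + Lnu h2.
Proof.
apply: EFin_inj; rewrite -LnuE EFinD -!LnuE -(integralD measurableT); try exact: int_poly.
by apply: eq_integral => y _; rewrite hornerD EFinD.
Qed.

Lemma Lnu_scale c h : Lnu (c *: h) = c * Lnu h.
Proof.
apply: EFin_inj; rewrite -LnuE EFinM -LnuE -(integralZl measurableT); last exact: int_poly.
by apply: eq_integral => y _; rewrite hornerZ EFinM.
Qed.

Lemma Lnu0 : Lnu 0 = 0.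
Proof. by rewrite -(scale0r 0) Lnu_scale mul0r. Qed.

Lemma Lnu_sum (I : Type) (s : seq I) (Pp : pred I) (G : I -> {poly R}) :
  Lnu (\sum_(i <- s | Pp i) G i) = \sum_(i <- s | Pp i) Lnu (G i).
Proof. by elim/big_rec2: _ => [|i y1 y2 _ <-]; rewrite ?Lnu0 ?Lnu_add. Qed.
End polyint.
Lemma path_idx_mono (r : nat) (i : nat -> 'I_r) (l m : nat) (s : 'I_r) :
  (l <= m)%N -> (path_idx i l s <= path_idx i m s)%N.
Proof.
move=> lm; rewrite /path_idx -!(big_mkord xpredT (fun t => nat_of_bool (i t == s))).
by rewrite [X in (_ <= X)%N](big_cat_nat _ (n:=l)) //= leq_addr.
Qed.

Lemma mnorm_path (r : nat) (i : nat -> 'I_r) (l : nat) : mnorm (path_idx i l) = l.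
Proof.
rewrite /mnorm /path_idx exchange_big /=.
rewrite -[RHS]card_ord -sum1_card; apply: eq_bigr => m _.
rewrite (bigD1 (i m)) //= eqxx big1 // => j /negbTE; rewrite eq_sym => -> //.
Qed.

Lemma hess0 (R : ringType) (J : nat -> nat -> R) k l m :
  (l + k < m)%N -> hesspow J k l m = 0.
Proof.
elim: k l => [|k IH] l /=.
  by rewrite addn0 => lm; rewrite (ltn_eqF lm).
move=> lm; rewrite big1 // => t _; rewrite IH ?mulr0 //.
by move: (ltn_ord t) lm; rewrite addnS; lia.
Qed.

Lemma Xpow_hess (R : comRingType) (J : nat -> nat -> R) (p : nat -> {poly R})
  (hJ : forall l, 'X * p l = \sum_(m < l.+2) J l m *: p m) k :
  forall l N, (l + k < N)%N -> 'X^k * p l = \sum_(m < N) hesspow J k l m *: p m.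
Proof.
elim: k => [|k IH] l N lN /=.
  have lN' : (l < N)%N by rewrite addn0 in lN.
  rewrite expr0 mul1r (bigD1 (Ordinal lN')) //= eqxx scale1r.
  rewrite big1 ?addr0 // => t /eqP tl.
  have -> : (l == t) = false by apply/negP => /eqP e; apply: tl; apply: val_inj.
  by rewrite scale0r.
rewrite exprSr -mulrA hJ mulr_sumr.
transitivity (\sum_(m < l.+2) \sum_(t < N) (J l m * hesspow J k m t) *: p t).
  apply: eq_bigr => m _; rewrite -mul_polyC mulrCA mul_polyC (IH m N); last first.
    by move: (ltn_ord m) lN; rewrite addnS; lia.
  by rewrite scaler_sumr; apply: eq_bigr => t _; rewrite scalerA.
by rewrite exchange_big /=; apply: eq_bigr => t _; rewrite scaler_suml.
Qed.

Lemma int_sumR (R : realType) (mu : {measure set R -> \bar R}) (I : Type)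
  (s : seq I) (Pp : pred I) (F : I -> R -> R) (v : I -> R) :
  (forall k, mu.-integrable setT (fun y => (F k y)%:E) /\
     (\int[mu]_y (F k y)%:E = (v k)%:E)%E) ->
  mu.-integrable setT (fun y => (\sum_(k <- s | Pp k) F k y)%:E) /\
  (\int[mu]_y (\sum_(k <- s | Pp k) F k y)%:E = (\sum_(k <- s | Pp k) v k)%:E)%E.
Proof.
move=> hF.
have e : (fun y => (\sum_(k <- s | Pp k) F k y)%:E) =
         (fun y => \sum_(k <- s | Pp k) (F k y)%:E)%E.
  by apply/funext => y; rewrite sumEFin.
rewrite e; split.
  by apply: (integrable_sum measurableT) => k _; case: (hF k).
rewrite (integral_sum measurableT); last by move=> k; case: (hF k).
by rewrite -sumEFin; apply: eq_bigr => k _; case: (hF k).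
Qed.

Section main.
Variables (R : realType) (r : nat)
  (mu_ : 'I_r -> {measure set R -> \bar R})
  (mu : {measure set R -> \bar R})
  (w : 'I_r -> R -> R)
  (P : ('I_r -> nat) -> {poly R})
  (A : ('I_r -> nat) -> 'I_r -> {poly R})
  (i : nat -> 'I_r)
  (J : nat -> nat -> R).
Hypothesis hmom : forall (j : 'I_r) (m : nat), (\int[mu_ j]_y (`|y| ^+ m)%:E < +oo)%E.
Hypothesis hP : forall nv : 'I_r -> nat,
      P nv \is monic /\ size (P nv) = (mnorm nv).+1 /\
      (forall (j : 'I_r) (m : nat), (m < nv j)%N ->
          (\int[mu_ j]_y (y ^+ m * (P nv).[y])%:E = 0)%E).
Hypothesis hA : forall nv : 'I_r -> nat,
      (forall j : 'I_r, (size (A nv j) <= nv j)%N) /\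
      (forall m : nat, (m < mnorm nv)%N ->
          (\sum_(j < r) \int[mu_ j]_y (y ^+ m * (A nv j).[y])%:E)%E
            = (((m.+1 == mnorm nv)%:R : R)%:E)).
Hypothesis hw : forall j : 'I_r, measurable_fun setT (w j).
Hypothesis hd : forall (j : 'I_r) (E : set R), measurable E ->
      (mu_ j E = \int[mu]_(y in E) (w j y)%:E)%E.
Hypothesis hJ : forall l : nat, 'X * pseq P i l = \sum_(m < l.+2) J l m *: pseq P i m.

Local Notation L s := (Lnu (mu_ s)).

Lemma LP nv s m : (m < nv s)%N -> L s ('X^m * P nv) = 0.
Proof.
move=> ms; case: (hP nv) => _ [_ h].
apply: EFin_inj; rewrite -LnuE //; have -> : (0%R%:E = 0)%E by [].
rewrite -(h s m ms).
by apply: eq_integral => y _; rewrite hornerM hornerXn.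
Qed.

Lemma LA nv m : (m < mnorm nv)%N ->
  \sum_(s < r) L s ('X^m * A nv s) = ((m.+1 == mnorm nv)%:R).
Proof.
move=> mn; case: (hA nv) => _ h.
apply: EFin_inj; rewrite -(h m mn) -sumEFin; apply: eq_bigr => s _.
by rewrite -LnuE //; apply: eq_integral => y _; rewrite hornerM hornerXn.
Qed.

Lemma biorth j m :
  \sum_(s < r) L s (A (path_idx i j.+1) s * pseq P i m) = (j == m)%:R.
Proof.
rewrite /pseq; have [jm|mj] := ltnP j m.
  rewrite (ltn_eqF jm) big1 // => s _.
  rewrite -[A _ s]coefK poly_def mulr_suml (Lnu_sum (hmom s)).
  apply: big1 => t _; rewrite -scalerAl (Lnu_scale (hmom s)) LP ?mulr0 //.
  apply: (leq_trans (ltn_ord t)); apply: (leq_trans ((hA _).1 s)).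
  exact: path_idx_mono.
set p := P (path_idx i m).
have sp : size p = m.+1 by case: (hP (path_idx i m)) => _ [-> _]; rewrite mnorm_path.
have lp : p`_m = 1.
  case: (hP (path_idx i m)) => /monicP + _; rewrite /lead_coef -/p sp //.
rewrite -[p]coefK poly_def.
transitivity (\sum_(s < r) \sum_(t < size p) p`_t * L s ('X^t * A (path_idx i j.+1) s)).
  apply: eq_bigr => s _; rewrite mulr_sumr (Lnu_sum (hmom s)); apply: eq_bigr => t _.
  by rewrite mulrC -scalerAl (Lnu_scale (hmom s)).
rewrite exchange_big /=.
transitivity (\sum_(t < size p) p`_t * ((t : nat) == j)%:R).
  apply: eq_bigr => t _; rewrite -mulr_sumr LA ?mnorm_path ?eqSS //.
  by have := ltn_ord t; rewrite [in X in (_ < X)%N -> _]sp; lia.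
rewrite sp big_ord_recr /= big1 ?add0r; last first.
  by move=> t _; rewrite (ltn_eqF (leq_trans (ltn_ord t) mj)) mulr0.
case: (eqVneq m j) => [e|ne]; first by rewrite lp mulr1.
by rewrite mulr0.
Qed.


Lemma term_int (h : {poly R}) s c :
  mu.-integrable setT (fun y => (c * (h.[y] * w s y))%:E) /\
  (\int[mu]_y (c * (h.[y] * w s y))%:E = (c * Lnu (mu_ s) h)%:E)%E.
Proof.
have [hi he] := density_int (hw s) (hd s) (@measurable_poly _ h setT) (int_poly (hmom s) h).
split.
  under eq_fun do rewrite EFinM.
  exact: (integrableZl measurableT).
under eq_integral do rewrite EFinM.
by rewrite (integralZl measurableT hi) he LnuE // EFinM.
Qed.

Lemma pointwise n k x y :
  CDkernel P A w i n x y * y ^+ k * CDkernel P A w i n y x =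
  \sum_(j < n) \sum_(j' < n) \sum_(s < r)
    ((pseq P i j).[x] * qseq A w i j' x) *
    ((A (path_idx i j.+1) s * ('X^k * pseq P i j')).[y] * w s y).
Proof.
rewrite /CDkernel mulr_suml mulr_suml; apply: eq_bigr => j _.
rewrite mulr_sumr; apply: eq_bigr => j' _.
rewrite [qseq A w i j y]/qseq mulr_sumr mulr_suml mulr_suml; apply: eq_bigr => s _.
rewrite !hornerM hornerXn; ring.
Qed.

Lemma main_eq n k x :
  (\int[mu]_y (CDkernel P A w i n x y * y ^+ k * CDkernel P A w i n y x)%:E
  = (\sum_(l < n) \sum_(l' < n)
        qseq A w i l x * hesspow J k l l' * (pseq P i l').[x])%R%:E)%E.
Proof.
under eq_integral do rewrite pointwise.
rewrite (int_sumR _ _ (fun j => int_sumR _ _ (fun j' =>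
   int_sumR _ _ (fun s => term_int _ s _)))).2.
congr EFin.
transitivity (\sum_(j < n) \sum_(j' < n)
   ((pseq P i j).[x] * qseq A w i j' x) * hesspow J k j' j).
  apply: eq_bigr => j _; apply: eq_bigr => j' _.
  rewrite -mulr_sumr; congr (_ * _).
  have jn : (j' + k < n + k)%N by rewrite ltn_add2r.
  under eq_bigr do rewrite (Xpow_hess hJ jn) mulr_sumr (Lnu_sum (hmom _)).
  rewrite exchange_big /=.
  transitivity (\sum_(m < n + k) hesspow J k j' m * (j == m :> nat)%:R).
    apply: eq_bigr => m _; rewrite -biorth mulr_sumr; apply: eq_bigr => s _.
    by rewrite -scalerAr (Lnu_scale (hmom _)).
  have jnk : (j < n + k)%N by apply: leq_trans (ltn_ord j) (leq_addr _ _).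
  rewrite (bigD1 (Ordinal jnk)) //= eqxx mulr1 big1 ?addr0 // => m /eqP mj.
  have -> : (j == m :> nat) = false by apply/negP => /eqP e; apply: mj; apply: val_inj.
  by rewrite mulr0.
rewrite exchange_big /=; apply: eq_bigr => l _; apply: eq_bigr => l' _.
by rewrite -mulrA mulrC.
Qed.

End main.

Local Close Scope classical_set_scope.
Local Open Scope ring_scope.

Theorem lemma1 (R : realType) (r : nat)
  (mu_ : 'I_r -> {measure set R -> \bar R})
  (mu : {measure set R -> \bar R})
  (w : 'I_r -> R -> R)
  (P : ('I_r -> nat) -> {poly R})
  (A : ('I_r -> nat) -> 'I_r -> {poly R})
  (i : nat -> 'I_r)
  (J : nat -> nat -> R)
  (n k : nat) (x : R) :
  (0 < r)%N ->
  (* all moments of each mu_j are finite *)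
  (forall (j : 'I_r) (m : nat), (\int[mu_ j]_y (`|y| ^+ m)%:E < +oo)%E) ->
  (* type II polynomials (perfect system): P_n monic of degree |n| *)
  (forall nv : 'I_r -> nat,
      P nv \is monic /\ size (P nv) = (mnorm nv).+1 /\
      (forall (j : 'I_r) (m : nat), (m < nv j)%N ->
          (\int[mu_ j]_y (y ^+ m * (P nv).[y])%:E = 0)%E)) ->
  (* type I polynomials *)
  (forall nv : 'I_r -> nat,
      (forall j : 'I_r, (size (A nv j) <= nv j)%N) /\
      (forall m : nat, (m < mnorm nv)%N ->
          (\sum_(j < r) \int[mu_ j]_y (y ^+ m * (A nv j).[y])%:E)%E
            = (((m.+1 == mnorm nv)%:R : R)%:E))) ->
  (* mu_j << mu with Radon-Nikodym derivative w_j = d mu_j / d mu *)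
  (forall j : 'I_r, measurable_fun setT (w j)) ->
  (forall (j : 'I_r) (E : set R), measurable E ->
      (mu_ j E = \int[mu]_(y in E) (w j y)%:E)%E) ->
  (* J is the (lower Hessenberg) recurrence matrix: x p_l = sum_{m<=l+1} J_{l,m} p_m *)
  (forall l : nat, 'X * pseq P i l = \sum_(m < l.+2) J l m *: pseq P i m) ->
  (forall l m : nat, (l.+1 < m)%N -> J l m = 0) ->
  (0 < n)%N ->
  (\int[mu]_y (CDkernel P A w i n x y * y ^+ k * CDkernel P A w i n y x)%:E
  = (\sum_(l < n) \sum_(l' < n)
        qseq A w i l x * hesspow J k l l' * (pseq P i l').[x])%R%:E)%E.
Proof.
move=> _ hmom hP hA hw hd hJ _ _.
exact: main_eq.
Qed.
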